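(* A nondecreasing sequence of positive integers is the detour sequence of a tree if and only if it is the sequence $1$, or the sequence $2,2$, or it has the form \[(a)_k,\ (a+1)_{k_1},\ (a+2)_{k_2},\ \ldots,\ (m)_{k_l}\] where $m \ge 3$ is an integer, $a=\left\lceil \frac{m+1}{2}\right\rceil$, $l=m-a$, $k_j \ge 2$ for $1\le j\le l$, and $k=1$ if $m$ is odd and $k=2$ if $m$ is even.
   Context: All graphs are finite and simple. The order of a path is its number of vertices. For a vertex $v$ of $G$, $\tau(v)$ is the order of a longest path in $G$ having $v$ as an endvertex. The detour sequence of $G$ is the nondecreasing sequence of the values $\tau(v)$, $v\in V(G)$ (one term per vertex). The notation $(n)_k$ denotes the integer $n$ repeated $k$ times consecutively. *)

(* Defs.v *)
From mathcomp Require Import all_boot.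
Set Implicit Arguments. Unset Strict Implicit. Unset Printing Implicit Defensive.

Definition simple_graph (T : finType) (e : rel T) : Prop :=
  symmetric e /\ irreflexive e.

(* A path (as a sequence of vertices): nonempty, consecutive vertices adjacent,
   all vertices distinct.  Its order is its size (number of vertices). *)
Definition is_gpath (T : finType) (e : rel T) (p : seq T) : bool :=
  match p with
  | [::] => false
  | x :: q => path e x q && uniq p
  end.

Definition is_gcycle (T : finType) (e : rel T) (p : seq T) : bool :=
  match p with
  | [::] => false
  | x :: q => (2 <= size q) && path e x q && e (last x q) x && uniq p
  end.

Definition is_tree (T : finType) (e : rel T) : Prop :=
  simple_graph e /\ 0 < #|T| /\
  (forall x y : T, connect e x y) /\
  (forall p : seq T, ~~ is_gcycle e p).

(* tau v: the order of a longest path having v as an endvertex.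
   (Every path has order <= #|T|, so ranging over n <= #|T| suffices.) *)
Definition tau (T : finType) (e : rel T) (v : T) : nat :=
  \max_(n < #|T|.+1 | [exists p : n.-tuple T,
        is_gpath e p && ((head v p == v) || (last v p == v))]) n.

Definition detour_seq (T : finType) (e : rel T) : seq nat :=
  sort leq [seq tau e v | v <- enum T].

(* The sequence (a)_k, (a+1)_{k_1}, ..., (m)_{k_l} with l = m - a = size ks. *)
Definition detour_form (a k : nat) (ks : seq nat) : seq nat :=
  nseq k a ++ flatten [seq nseq (nth 0 ks j) (a + j.+1) | j <- iota 0 (size ks)].

(* Main.v *)
Require Import Defs.
From mathcomp Require Import all_boot zify.
Set Implicit Arguments. Unset Strict Implicit. Unset Printing Implicit Defensive.


Lemma head_rev (T : Type) (d : T) (p : seq T) : head d (rev p) = last d p.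
Proof. case: p => [|x q]; first by []. by rewrite lastI rev_rcons /= last_rcons. Qed.

Lemma last_rev (T : Type) (d : T) (p : seq T) : last d (rev p) = head d p.
Proof. by rewrite -[in RHS](revK p) head_rev. Qed.

Section Gen.
Variables (T : finType) (e : rel T).
Hypothesis esym : symmetric e.

Lemma gpath_uniq p : is_gpath e p -> uniq p.
Proof. by case: p => //= x q /andP[]. Qed.

Lemma gpath_rev p : is_gpath e (rev p) = is_gpath e p.
Proof.
case: p => [//|x q].
have E : rev (x :: q) = last x q :: rev (belast x q) by rewrite lastI rev_rcons.
rewrite /is_gpath E -E rev_uniq rev_path.
congr (_ && _); apply: eq_path => a b; exact: esym.
Qed.

Lemma gpathE x q : is_gpath e (x :: q) = path e x q && uniq (x :: q).
Proof. by []. Qed.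

Lemma gpath_catl A B : A != [::] -> is_gpath e (A ++ B) -> is_gpath e A.
Proof.
case: A => [//|a A] _; rewrite cat_cons !gpathE cat_path -cat_cons cat_uniq.
by case/andP => /andP[-> _] /and3P[-> _ _].
Qed.

Lemma gpath_catr A B : B != [::] -> is_gpath e (A ++ B) -> is_gpath e B.
Proof.
move=> nB; rewrite -gpath_rev rev_cat => /gpath_catl.
by rewrite gpath_rev; apply; rewrite -size_eq0 size_rev size_eq0.
Qed.

Lemma gpath_join A y B : is_gpath e (rcons A y) -> is_gpath e (y :: B) ->
  ~~ has (mem (y :: B)) A -> is_gpath e (A ++ y :: B).
Proof.
case: A => [//|a A]; rewrite rcons_cons cat_cons !gpathE rcons_path.
move=> /andP[/andP[pA eA] uA] /andP[pB uB] hA.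
rewrite -cat_cons cat_uniq uB has_sym hA andbT cat_path pA /= eA pB /=.
rewrite ?andbT; move: uA; rewrite -rcons_cons rcons_uniq => /andP[_ H]; exact: H.
Qed.

Lemma gpath_size p : is_gpath e p -> size p <= #|T|.
Proof. by move/gpath_uniq/card_uniqP <-; exact: max_card. Qed.

Lemma tau_ge v p : is_gpath e p -> (head v p == v) || (last v p == v) ->
  size p <= tau e v.
Proof.
move=> gp hv; rewrite /tau.
have Hs : size p < #|T|.+1 by rewrite ltnS gpath_size.
apply: (@leq_bigmax_cond _ _ _ (Ordinal Hs)).
by apply/existsP; exists (in_tuple p); rewrite /= gp.
Qed.

Lemma tau_le v N : (forall p, is_gpath e p -> head v p = v -> size p <= N) ->
  tau e v <= N.
Proof.
move=> H; apply/bigmax_leqP => n /existsP[t /andP[gp /orP[/eqP h|/eqP h]]].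
  by rewrite -(size_tuple t); apply: H.
rewrite -(size_tuple t) -size_rev; apply: H; first by rewrite gpath_rev.
by rewrite head_rev.
Qed.

Lemma tau_gt0 v : 0 < tau e v.
Proof. by apply: (@tau_ge v [:: v]) => //=; rewrite eqxx. Qed.

End Gen.


Lemma split_first (T : Type) (a : pred T) s : has a s ->
  exists A y B, [/\ s = A ++ y :: B, a y & ~~ has a A].
Proof.
elim: s => [//|x s IH] /=; case ax: (a x) => /=.
  by move=> _; exists [::], x, s.
by case/IH => A [y [B [-> ay hA]]]; exists (x :: A), y, B; rewrite /= ax.
Qed.

Lemma split_last (T : Type) (a : pred T) s : has a s ->
  exists A y B, [/\ s = A ++ y :: B, a y & ~~ has a B].
Proof.
rewrite -has_rev => /split_first [A [y [B [E ay hA]]]].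
exists (rev B), y, (rev A); split => //; last by rewrite has_rev.
by rewrite -[s]revK E rev_cat rev_cons cat_rcons.
Qed.

Lemma cat_uniqI (T : eqType) (s1 s2 : seq T) : uniq s1 -> uniq s2 ->
  (forall z, z \in s1 -> z \notin s2) -> uniq (s1 ++ s2).
Proof.
move=> u1 u2 H; rewrite cat_uniq u1 u2 andbT /=.
by apply/hasPn => z z2; apply/negP => z1; move: (H z z1); rewrite z2.
Qed.

Lemma splitE (T : eqType) (x : T) (s : seq T) : x \in s ->
  exists A B, s = A ++ x :: B.
Proof. by case/splitPr => A B; exists A, B. Qed.

Lemma uniq_mid (T : eqType) (s1 s2 : seq T) x : uniq (s1 ++ x :: s2) ->
  [/\ uniq s1, x \notin s1, x \notin s2, uniq s2 &
      forall z, z \in s1 -> z \notin x :: s2].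
Proof.
rewrite cat_uniq cons_uniq => /and3P[u1 h /andP[xs2 u2]]; split => //.
  by apply/negP => xs1; move/hasPn: h => /(_ x (mem_head _ _)); rewrite xs1.
by move=> z zs1; apply/negP => zs2; move/hasPn: h => /(_ z zs2); rewrite zs1.
Qed.

Lemma gcycleE (T : finType) (e : rel T) x q : is_gcycle e (x :: q) =
  [&& 2 <= size q, path e x q, e (last x q) x & uniq (x :: q)].
Proof. by rewrite /is_gcycle !andbA. Qed.

Section Acyc.
Variables (T : finType) (e : rel T).
Hypothesis esym : symmetric e.
Hypothesis acyc : forall p, ~~ is_gcycle e p.

Lemma pen A y B u : is_gpath e (A ++ y :: B) -> last y B = u -> y != u ->
  e y u -> B = [:: u].
Proof.
move=> gp lB nyu eyu; have := gpath_catr esym (A := A) (B := y :: B) isT gp.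
case: B {gp} lB => [|b B] lB g2; first by rewrite -lB eqxx in nyu.
case: B lB g2 => [|c B] lB g2; first by rewrite -lB.
case/andP: g2 => pth un; move: (acyc (y :: b :: c :: B)).
by rewrite gcycleE pth un lB esym eyu.
Qed.

Lemma cycle_nbrs c x : is_gcycle e c -> x \in c ->
  exists y z, [/\ y != z, y \in c, z \in c, e x y & e x z].
Proof.
case: c => [//|x0 q]; rewrite gcycleE => /and4P[sz pq lq un] xin.
have cyc : cycle e (x0 :: q) by rewrite /= rcons_path pq lq.
case: (rot_to xin) => i s' rE.
have := rot_cycle i e (x0 :: q); rewrite rE cyc => cyc'.
have := rot_uniq i (x0 :: q); rewrite rE un => un'.
have := size_rot i (x0 :: q); rewrite rE /= => -[szE].
have memE z : (z \in x0 :: q) = (z \in x :: s') by rewrite -rE mem_rot.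
case: s' rE cyc' un' szE memE => [|y s] rE cyc' un' szE memE.
  by rewrite -szE in sz.
case: s rE cyc' un' szE memE => [|z s] rE cyc' un' szE memE.
  by rewrite -szE in sz.
exists y, (last z s).
move: cyc'; rewrite /= rcons_path => /and3P[exy _ /andP[_ elx]].
split.
- apply/negP => /eqP E; move: un'; rewrite /= E mem_last /= andbF //.
- by rewrite memE !inE eqxx orbT.
- by rewrite memE 2!in_cons mem_last !orbT.
- exact: exy.
- by rewrite esym.
Qed.

Lemma no_fork x a p b q : is_gpath e (x :: a :: p) -> is_gpath e (x :: b :: q) ->
  last a p = last b q -> a = b.
Proof.
move=> gp gq lE.
have hQ : has (mem (b :: q)) (a :: p).
  by apply/hasP; exists (last a p); [exact: mem_last | rewrite inE lE mem_last].
case: (split_first hQ) => P1 [c [P2 [PE cQ hP1]]].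
case: (splitE cQ) => Q1 [Q2 QE].
rewrite PE in gp; rewrite QE in gq hP1.
case: (eqVneq a b) => // nab; exfalso.
have sz : 2 <= size (P1 ++ c :: rev Q1).
  case: P1 PE {gp hP1} => [|a1 P1] PE; last by rewrite /= size_cat /= addnS.
  case: Q1 QE {gq} => [|b1 Q1] QE; last by rewrite size_cat /= size_rev.
  by move: PE QE nab => /= [-> _] [-> _]; rewrite eqxx.
move: (gpath_uniq gp); rewrite cons_uniq => /andP[xP /uniq_mid[uP1 cP1 _ _ _]].
move: (gpath_uniq gq); rewrite cons_uniq => /andP[xQ /uniq_mid[uQ1 cQ1 _ _ _]].
have gq' : is_gpath e (c :: rcons (rev Q1) x).
  rewrite -rev_cons -rev_rcons gpath_rev //.
  by apply: (@gpath_catl _ _ _ Q2) => //; rewrite cat_rcons.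
move: gq'; rewrite gpathE rcons_path => /andP[/andP[pQ lQ] _].
move: gp; rewrite gpathE cat_path => /andP[/andP[pP1 /= /andP[lP1 _]] _].
apply: (negP (acyc (x :: P1 ++ c :: rev Q1))).
rewrite gcycleE sz cat_path pP1 /= lP1 pQ last_cat /= lQ.
rewrite !mem_cat !inE mem_rev negb_or.
move: xP xQ; rewrite !mem_cat !inE !negb_or => /andP[-> /andP[-> _]] /andP[-> _] /=.
apply: cat_uniqI => //; first by rewrite cons_uniq mem_rev rev_uniq cQ1.
move=> z zP1; rewrite inE mem_rev negb_or; apply/andP; split.
  by apply: contraNneq cP1 => <-.
by move: (hasPn hP1 z zP1); apply: contraNN => zQ1; rewrite inE mem_cat zQ1.
Qed.

End Acyc.


Section Tree.
Variables (T : finType) (e : rel T).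
Hypothesis esym : symmetric e.
Hypothesis acyc : forall p, ~~ is_gcycle e p.

Lemma upath x p q : is_gpath e (x :: p) -> is_gpath e (x :: q) ->
  last x p = last x q -> p = q.
Proof.
elim: p x q => [|a p IH] x [|b q] // gp gq /= lE.
- move: (gpath_uniq gq); rewrite cons_uniq => /andP[/negP[]].
  by rewrite lE mem_last.
- move: (gpath_uniq gp); rewrite cons_uniq => /andP[/negP[]].
  by rewrite -lE mem_last.
have ab := no_fork esym acyc gp gq lE; subst b; congr (_ :: _).
apply: (IH a) => //.
  exact: (gpath_catr esym (A := [:: x]) (B := a :: p) isT gp).
exact: (gpath_catr esym (A := [:: x]) (B := a :: q) isT gq).
Qed.

Lemma upath' d p q : is_gpath e p -> is_gpath e q ->
  head d p = head d q -> last d p = last d q -> p = q.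
Proof.
case: p => [//|x p]; case: q => [//|y q] gp gq /= hE; subst y => lE.
by congr (_ :: _); apply: (upath gp gq).
Qed.

Lemma head_rcons_cat (d z : T) A B : head d (rcons A z) = head d (A ++ z :: B).
Proof. by case: A. Qed.

Lemma onpath_side L y R Q Q1 z Q2 : is_gpath e (L ++ y :: R) ->
  (forall p, is_gpath e p -> size p <= size (L ++ y :: R)) ->
  is_gpath e Q -> Q = Q1 ++ z :: Q2 -> head y Q = y -> z \in y :: R ->
  {in Q2, forall w, w \notin L ++ y :: R} -> size Q <= (size R).+1.
Proof.
move=> gP lP gQ QE hQ zR hQ2.
case: (splitE zR) => S1 [S2 SE].
have gyR : is_gpath e (y :: R) := gpath_catr esym (A := L) (B := y :: R) isT gP.
have gS : is_gpath e (rcons S1 z).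
  by move: gyR; rewrite SE -cat_rcons; apply: gpath_catl; case: S1 {SE}.
have gQ1 : is_gpath e (rcons Q1 z).
  by move: gQ; rewrite QE -cat_rcons; apply: gpath_catl; case: Q1 {QE}.
have hS : head y (rcons S1 z) = y by rewrite (head_rcons_cat _ _ _ S2) -SE.
have hQ1 : head y (rcons Q1 z) = y by rewrite (head_rcons_cat _ _ _ Q2) -QE.
have E : rcons Q1 z = rcons S1 z.
  by apply: (upath' (d := y)) => //; [rewrite hS hQ1 | rewrite !last_rcons].
case: (rcons_inj E) => {}E; subst S1.
have PE : L ++ y :: R = (L ++ Q1) ++ z :: S2 by rewrite SE catA.
have gN : is_gpath e ((L ++ Q1) ++ z :: Q2).
  apply: gpath_join.
  - move: gP; rewrite PE -cat_rcons; apply: gpath_catl.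
    by case: (L ++ Q1).
  - by move: gQ; rewrite QE; apply: gpath_catr.
  - apply/hasPn => w wLQ; rewrite inE negb_or; apply/andP; split.
      move: (gpath_uniq gP); rewrite PE => /uniq_mid[_ zn _ _ _].
      by apply: contraNneq zn => <-.
    apply/negP => wQ2; move: (hQ2 w wQ2); rewrite PE mem_cat wLQ //.
have := lP _ gN; rewrite !size_cat QE size_cat /= => H.
have := lP _ gN; rewrite PE !size_cat /=; lia.
Qed.

Lemma onpath_le L y R : is_gpath e (L ++ y :: R) ->
  (forall p, is_gpath e p -> size p <= size (L ++ y :: R)) ->
  tau e y <= maxn (size L).+1 (size R).+1.
Proof.
move=> gP lP; apply: (tau_le esym) => Q gQ hQ.
have yQ : y \in Q by case: Q gQ hQ => [//|q Q] _ /= ->; rewrite mem_head.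
have hasQ : has (mem (L ++ y :: R)) Q.
  by apply/hasP; exists y => //; rewrite inE mem_cat mem_head orbT.
case: (split_last hasQ) => Q1 [z [Q2 [QE zP hQ2]]].
have hQ2' : {in Q2, forall w, w \notin L ++ y :: R}.
  by move=> w wQ2; exact: (hasPn hQ2 w wQ2).
move: zP; rewrite inE mem_cat => /orP[zL|zR].
- have rE : rev (L ++ y :: R) = rev R ++ y :: rev L.
    by rewrite rev_cat rev_cons cat_rcons.
  have gP' : is_gpath e (rev R ++ y :: rev L) by rewrite -rE gpath_rev.
  have lP' : forall p, is_gpath e p -> size p <= size (rev R ++ y :: rev L).
    by move=> p gp; rewrite -rE size_rev; apply: lP.
  have := onpath_side gP' lP' gQ QE hQ _ _.
  rewrite size_rev => H; apply: leq_trans (H _ _) _.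
  + by rewrite inE mem_rev zL orbT.
  + by move=> w wQ2; rewrite -rE mem_rev; apply: hQ2'.
  + exact: leq_maxl.
- apply: leq_trans (onpath_side gP lP gQ QE hQ zR hQ2') _; exact: leq_maxr.
Qed.

Lemma onpath_ge L y R : is_gpath e (L ++ y :: R) ->
  maxn (size L).+1 (size R).+1 <= tau e y.
Proof.
move=> gP; rewrite geq_max; apply/andP; split.
  have rE : rev (L ++ y :: R) = rev R ++ y :: rev L.
    by rewrite rev_cat rev_cons cat_rcons.
  have gP' : is_gpath e (rev R ++ y :: rev L) by rewrite -rE gpath_rev.
  have := tau_ge (v := y) (gpath_catr esym (A := rev R) (B := y :: rev L) isT gP').
  by rewrite /= eqxx size_rev; apply.
have := tau_ge (v := y) (gpath_catr esym (A := L) (B := y :: R) isT gP).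
by rewrite /= eqxx; apply.
Qed.

Hypothesis conn : forall x y, connect e x y.

Lemma offpath v P : is_gpath e P -> v \notin P ->
  exists L y R, P = L ++ y :: R /\ (maxn (size L).+1 (size R).+1).+1 <= tau e v.
Proof.
case: P => [//|x0 P'] gP vP.
have [p' [pth' un' lE']] : exists p', [/\ path e v p', uniq (v :: p') & last v p' = x0].
  case/connectP: (conn v x0) => p pth ->.
  by case/shortenP: pth => p' pth' un' _; exists p'.
have gs : is_gpath e (v :: p') by rewrite gpathE pth' un'.
have hs : has (mem (x0 :: P')) (v :: p').
  by apply/hasP; exists x0; [rewrite -lE' mem_last | rewrite inE mem_head].
case: (split_first hs) => A [y [B [sE yP hA]]].
case: A sE hA => [|a A] sE hA.
  by case: sE => vE; move: vP; rewrite vE => /negP[]; exact: yP.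
case: sE => aE sE; subst a.
case: (splitE yP) => L [R PE]; exists L, y, R; split => //.
have gA : is_gpath e (rcons (v :: A) y).
  by move: gs; rewrite sE -cat_cons -cat_rcons; apply: gpath_catl.
have nA : forall Z : seq T, {subset Z <= x0 :: P'} -> ~~ has (mem Z) (v :: A).
  move=> Z sub; apply/hasPn => w wA; apply/negP => wS.
  by move/hasP: hA => []; exists w => //; apply: sub.
have rE : rev (L ++ y :: R) = rev R ++ y :: rev L.
  by rewrite rev_cat rev_cons cat_rcons.
have gP' : is_gpath e (rev R ++ y :: rev L) by rewrite -rE gpath_rev // -PE.
have g1 : is_gpath e ((v :: A) ++ y :: R).
  apply: gpath_join => //; first by apply: (gpath_catr esym (A := L)); rewrite -?PE.
  by apply: nA => w wR; rewrite PE mem_cat wR orbT.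
have g2 : is_gpath e ((v :: A) ++ y :: rev L).
  apply: gpath_join => //; first by apply: (gpath_catr esym (A := rev R)).
  by apply: nA => w wL; rewrite PE -mem_rev rE mem_cat wL orbT.
have := tau_ge (v := v) g1; have := tau_ge (v := v) g2.
rewrite /= eqxx /= !size_cat /= size_rev => /(_ isT) H1 /(_ isT) H2.
lia.
Qed.

End Tree.


Definition fpos (m i : nat) := maxn i.+1 (m - i).

Lemma count_mem_iota1 u m : u < m -> count_mem u (iota 0 m) = 1.
Proof. by move=> um; rewrite count_uniq_mem ?iota_uniq // mem_iota um. Qed.

Lemma count_two m u w : u < m -> w < m ->
  count (fun i => (i == u) || (i == w)) (iota 0 m) = if u == w then 1 else 2.
Proof.
move=> um wm; case: eqVneq => [<-|uw].
  by rewrite (eq_count (a2 := pred1 u)) ?count_mem_iota1 // => i; rewrite orbb.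
have E0 : count (predI (pred1 u) (pred1 w)) (iota 0 m) = 0.
  rewrite (eq_count (a2 := pred0)) ?count_pred0 // => i /=.
  by apply/andP => -[/eqP -> /eqP E]; rewrite E eqxx in uw.
have := count_predUI (pred1 u) (pred1 w) (iota 0 m).
rewrite E0 addn0 !count_mem_iota1 // => H.
Qed.

Lemma fpos_eq m i t : 0 < m -> i < m ->
  (fpos m i == t) = ((i == t.-1) || (i == m - t)) && ((m.+2)./2 <= t <= m).
Proof.
rewrite /fpos => m0 im; case: (eqVneq (maxn i.+1 (m - i)) t) => H; apply/esym.
  apply/andP; split; last by apply/andP; split; lia.
  by case: (leqP (m - i) i.+1) => h; apply/orP; [left|right]; apply/eqP; lia.
apply/negbTE/negP => /andP[/orP[/eqP E|/eqP E] /andP[h1 h2]]; lia.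
Qed.

Lemma count_base m t : 0 < m ->
  count_mem t (map (fpos m) (iota 0 m)) =
  if ((m.+2)./2 <= t <= m) then (if t == (m.+2)./2 then (if odd m then 1 else 2) else 2)
  else 0.
Proof.
move=> m0; rewrite count_map.
rewrite (@eq_in_count _ _ (fun i => ((i == t.-1) || (i == m - t)) && ((m.+2)./2 <= t <= m))); last first.
  by move=> i; rewrite mem_iota /= => im; rewrite -fpos_eq.
case: ifP => ht; last first.
  by rewrite (eq_count (a2 := pred0)) ?count_pred0 // => i; rewrite andbF.
rewrite (eq_count (a2 := fun i => (i == t.-1) || (i == m - t))); last first.
  by move=> i; rewrite andbT.
rewrite count_two; [|lia|lia].
move: (odd_double_half m); rewrite -addnn.
case: (odd m) => /= Hm; case: eqVneq => E; case: eqVneq => E2 //; lia.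
Qed.

Lemma count_flat a g t l :
  count_mem t (flatten [seq nseq (g j) (a + j.+1) | j <- iota 0 l]) =
  if (a < t <= a + l) then g (t - a.+1) else 0.
Proof.
elim: l => [|l IH]; first by rewrite /=; case: ifP => //; lia.
rewrite -addn1 iotaD map_cat flatten_cat count_cat IH /= cats0 count_nseq /=.
case: (ltngtP t (a + l.+1)) => h; rewrite ?mul0n ?addn0 ?mul1n.
- by case: ifP; case: ifP => //; lia.
- by case: ifP; case: ifP => //; lia.
- case: ifP => [|_]; first lia.
  case: ifP => [_|]; last lia.
  by rewrite !add0n; congr g; lia.
Qed.

Lemma count_detour a k ks t :
  count_mem t (detour_form a k ks) =
  (a == t) * k + (if (a < t <= a + size ks) then nth 0 ks (t - a.+1) else 0).
Proof. by rewrite /detour_form count_cat count_nseq count_flat. Qed.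

Lemma nseqS_rcons (T : Type) n (x : T) : nseq n.+1 x = rcons (nseq n x) x.
Proof. by elim: n => //= n ->. Qed.

Lemma sorted_app_nseq s n x : sorted leq s -> all (fun y => y <= x) s ->
  sorted leq (s ++ nseq n x).
Proof.
move=> ss als; elim: n => [|n IH]; first by rewrite cats0.
rewrite nseqS_rcons -rcons_cat.
have al : all (fun y => y <= x) (s ++ nseq n x).
  by rewrite all_cat als all_nseq leqnn orbT.
move: IH al; case: (s ++ nseq n x) => [//|y s'] /=.
rewrite rcons_path => -> /andP[yx ax] /=.
have : last y s' \in y :: s' by exact: mem_last.
rewrite inE => /orP[/eqP -> //|ls]; exact: (allP ax _ ls).
Qed.

Lemma detour_sorted_all a k g l :
  sorted leq (nseq k a ++ flatten [seq nseq (g j) (a + j.+1) | j <- iota 0 l]) &&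
  all (fun y => y <= a + l) (nseq k a ++ flatten [seq nseq (g j) (a + j.+1) | j <- iota 0 l]).
Proof.
elim: l => [|l /andP[IH1 IH2]].
  rewrite /= cats0 addn0 all_nseq leqnn orbT andbT.
  by have := @sorted_app_nseq [::] k a isT isT.
rewrite -addn1 iotaD map_cat flatten_cat /= cats0 catA.
apply/andP; split.
  apply: sorted_app_nseq => //; apply: sub_all IH2 => y /=; lia.
rewrite all_cat all_nseq; apply/andP; split; last by rewrite orbC; apply/orP; left; lia.
by apply: sub_all IH2 => y /=; lia.
Qed.

Lemma detour_sorted a k ks : sorted leq (detour_form a k ks).
Proof. by case/andP: (detour_sorted_all a k (nth 0 ks) (size ks)). Qed.

Lemma perm_countI (s1 s2 : seq nat) :
  (forall x, count_mem x s1 = count_mem x s2) -> perm_eq s1 s2.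
Proof. by move=> H; rewrite /perm_eq; apply/allP => x _ /=; rewrite H. Qed.

Lemma count_out (O : seq nat) p t : all p O -> ~~ p t -> count_mem t O = 0.
Proof.
move=> aO pt; apply/count_memPn; apply: contra pt => tO.
exact: (allP aO).
Qed.

Lemma comb_fw m (X O : seq nat) : 0 < m ->
  all (fun t => ((m.+2)./2 < t) && (t <= m)) O ->
  perm_eq X (map (fpos m) (iota 0 m) ++ O) ->
  exists ks, [/\ size ks = m - (m.+2)./2, all (fun kj => 2 <= kj) ks &
    perm_eq X (detour_form (m.+2)./2 (if odd m then 1 else 2) ks)].
Proof.
move=> m0 aO pX.
set a := (m.+2)./2.
exists [seq (count_mem (a + j.+1) O).+2 | j <- iota 0 (m - a)].
split; first by rewrite size_map size_iota.
  by rewrite all_map; apply/allP.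
apply: (perm_trans pX); apply: perm_countI => t.
rewrite count_cat count_base // count_detour size_map size_iota.
have am : a <= m by rewrite /a; lia.
rewrite (_ : a + (m - a) = m); last lia.
case: (ltngtP t a) => h.
- rewrite (count_out aO) /=; last by rewrite negb_and -ltnNge; apply/orP; left; lia.
  by repeat (case: ifP => ?); lia.
- case: (leqP t m) => h2.
  + rewrite /=.
    rewrite (nth_map 0); last by rewrite size_iota; lia.
    by rewrite nth_iota; [rewrite (_ : a + (0 + (t - a.+1)).+1 = t) //; lia | lia].
  + rewrite (count_out aO) /=; last by rewrite negb_and -ltnNge; apply/orP; right; lia.
    by repeat (case: ifP => ?); lia.
- subst t; rewrite (count_out aO) /=; last by rewrite negb_and ltnn.
  by rewrite am /= addn0; case: (odd m).
Qed.

Lemma comb_bw m (ks : seq nat) : 0 < m ->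
  size ks = m - (m.+2)./2 -> all (fun kj => 2 <= kj) ks ->
  exists O, all (fun t => ((m.+2)./2 < t) && (t <= m)) O /\
    perm_eq (detour_form (m.+2)./2 (if odd m then 1 else 2) ks)
            (map (fpos m) (iota 0 m) ++ O).
Proof.
move=> m0 sk ak; set a := (m.+2)./2 in sk *.
have am : a <= m by rewrite /a; lia.
set O := flatten [seq nseq (nth 0 ks j - 2) (a + j.+1) | j <- iota 0 (m - a)].
have cO t : count_mem t O = if (a < t <= a + (m - a)) then nth 0 ks (t - a.+1) - 2 else 0.
  exact: count_flat.
exists O; split.
  apply/allP => t tO; apply/negPn/negP => bad.
  move/count_memPn: tO; rewrite cO; case: ifP => // h; lia.
apply: perm_countI => t.
rewrite count_detour count_cat count_base // cO sk.
rewrite (_ : a + (m - a) = m); last lia.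
case: (ltngtP t a) => h.
- by rewrite /=; repeat (case: ifP => ?); lia.
- case: (leqP t m) => h2.
  + rewrite /=.
    have : 2 <= nth 0 ks (t - a.+1).
      by apply: (allP ak); apply: mem_nth; rewrite sk; lia.
    lia.
  + by rewrite /=; repeat (case: ifP => ?); lia.
- subst t; rewrite am /= mul1n addn0.
  by rewrite /a; case: (odd m).
Qed.


Lemma longest_exists (T : finType) (e : rel T) : 0 < #|T| ->
  exists P : seq T, is_gpath e P /\ forall p, is_gpath e p -> size p <= size P.
Proof.
case/card_gt0P => x _.
pose Pn := fun n => [exists t : n.-tuple T, is_gpath e t].
have exP : exists n, Pn n by exists 1; apply/existsP; exists [tuple x].
have ubP : forall n, Pn n -> n <= #|T|.
  by move=> n /existsP[t /gpath_size]; rewrite size_tuple.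
case: (ex_maxnP exP ubP) => n /existsP[t gt] mx.
exists t; split => // p gp; rewrite size_tuple; apply: mx.
by apply/existsP; exists (in_tuple p).
Qed.

Section TreeP.
Variables (T : finType) (e : rel T).
Hypothesis esym : symmetric e.
Hypothesis acyc : forall p, ~~ is_gcycle e p.
Variable P : seq T.
Hypothesis gP : is_gpath e P.
Hypothesis lP : forall p, is_gpath e p -> size p <= size P.

Lemma tau_nth x0 i : i < size P -> tau e (nth x0 P i) = fpos (size P) i.
Proof.
move=> iP.
have PE : P = take i P ++ nth x0 P i :: drop i.+1 P by rewrite -drop_nth // cat_take_drop.
have gP' : is_gpath e (take i P ++ nth x0 P i :: drop i.+1 P) by rewrite -PE.
have lP' : forall p, is_gpath e p -> size p <= size (take i P ++ nth x0 P i :: drop i.+1 P).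
  by rewrite -PE.
have H1 := onpath_le esym acyc gP' lP'.
have H2 := onpath_ge esym gP'.
move: H1 H2; rewrite size_takel ?size_drop; last exact: ltnW.
rewrite /fpos => H1 H2; apply/eqP; rewrite eqn_leq; apply/andP; split.
  by apply: leq_trans H1 _; lia.
by apply: leq_trans H2; lia.
Qed.

Lemma map_tau_P : map (tau e) P = map (fpos (size P)) (iota 0 (size P)).
Proof.
case E: P => [//|x0 P']; rewrite -E.
apply: (@eq_from_nth _ 0); first by rewrite !size_map size_iota.
move=> i; rewrite size_map => iP.
rewrite (nth_map x0) // (nth_map 0) ?size_iota // nth_iota // add0n.
exact: tau_nth.
Qed.

End TreeP.

Lemma tree_multiset (T : finType) (e : rel T) : is_tree e ->
  exists m O, [/\ 0 < m, all (fun t => ((m.+2)./2 < t) && (t <= m)) O &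
    perm_eq (map (tau e) (enum T)) (map (fpos m) (iota 0 m) ++ O)].
Proof.
case=> [[esym eirr] [cT [conn acyc]]].
case: (longest_exists e cT) => P [gP lP].
have m0 : 0 < size P.
  by case/card_gt0P: cT => x _; apply: (leq_trans _ (lP [:: x] isT)).
exists (size P), (map (tau e) (filter (predC (mem P)) (enum T))); split => //.
  rewrite all_map; apply/allP => v; rewrite mem_filter /= => /andP[vP _].
  case: (offpath esym conn gP vP) => L [y [R [PE H]]].
  have H2 : tau e v <= size P by apply: (tau_le esym) => p gp _; apply: lP.
  move: H2; rewrite PE size_cat /= => H2; apply/andP; split; lia.
have pe : perm_eq (enum T) (P ++ filter (predC (mem P)) (enum T)).
  apply: uniq_perm; first exact: enum_uniq.
    apply: cat_uniqI; [exact: gpath_uniq gP | by rewrite filter_uniq ?enum_uniq |].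
    by move=> z zP; rewrite mem_filter /= zP.
  by move=> z; rewrite mem_cat mem_filter mem_enum /=; case: (z \in P).
by rewrite -(map_tau_P esym acyc gP lP) -map_cat; apply: perm_map.
Qed.


Definition enat (i j : nat) := (i.+1 == j) || (j.+1 == i).
Definition pg (m : nat) : rel 'I_m := fun i j => enat i j.
Arguments pg : clear implicits.

Lemma pg_sym (m : nat) : symmetric (pg m).
Proof. by move=> i j; rewrite /pg /enat orbC. Qed.

Lemma pg_irr (m : nat) : irreflexive (pg m).
Proof. by move=> i; rewrite /pg /enat; apply/negbTE; rewrite negb_or; apply/andP; split; apply/eqP; lia. Qed.

Lemma pg_conn (m : nat) (i j : 'I_m) : connect (pg m) i j.
Proof.
have H : forall d (i j : 'I_m), (j : nat) = i + d -> connect (pg m) i j.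
  elim=> [|d IH] i0 j0 E.
    by rewrite addn0 in E; rewrite (val_inj E) connect0.
  have lt : i0 + d < m by have := ltn_ord j0; lia.
  apply: connect_trans (IH i0 (Ordinal lt) erefl) (connect1 _).
  by rewrite /pg /enat /= E addnS eqxx.
case: (leqP i j) => h.
  by apply: (H (j - i)); lia.
rewrite (sym_connect_sym (@pg_sym m)); apply: (H (i - j)); lia.
Qed.

Lemma pg_acyc (m : nat) p : ~~ is_gcycle (pg m) p.
Proof.
apply/negP => cp; case: p cp => [//|x0 q] cp.
case: (@arg_maxnP _ x0 (fun i => i \in x0 :: q) (fun i : 'I_m => i : nat) (mem_head _ _)) => M MP Mmax.
case: (cycle_nbrs (@pg_sym m) cp MP) => y [z [yz yP zP eMy eMz]].
move: (Mmax y yP) (Mmax z zP) => /= hy hz.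
move: eMy eMz; rewrite /pg /enat => /orP[/eqP h1|/eqP h1] /orP[/eqP h2|/eqP h2]; try lia.
have E : y = z by apply: ord_inj; lia.
by rewrite E eqxx in yz.

Qed.

Lemma pg_tree (m : nat) : 0 < m -> is_tree (pg m).
Proof.
move=> m0; split; first by split; [exact: (@pg_sym m) | exact: (@pg_irr m)].
split; first by rewrite card_ord.
by split; [exact: pg_conn | exact: pg_acyc].
Qed.

Lemma path_iota k n : path enat k (iota k.+1 n).
Proof. by elim: n k => //= n IH k; rewrite /enat eqxx IH. Qed.

Lemma pg_gpath (m : nat) : 0 < m -> is_gpath (pg m) (enum 'I_m).
Proof.
case: m => [//|m] _.
have E := val_enum_ord m.+1.
case Ee: (enum 'I_m.+1) E => [|x s]; first by [].
move=> E; have [x0 sE] : val x = 0 /\ map val s = iota 1 m by case: E.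
have -> : is_gpath (pg m.+1) (x :: s) = path (pg m.+1) x s && uniq (x :: s) by [].
rewrite -Ee enum_uniq andbT.
have -> : path (pg m.+1) x s = path enat (val x) (map val s) by rewrite path_map.
by rewrite x0 sE path_iota.
Qed.

Lemma pg_tau (m : nat) (i : 'I_m) : tau (pg m) i = fpos m i.
Proof.
have m0 : 0 < m by case: i => /= i; lia.
have gp := pg_gpath m0.
have lp : forall p, is_gpath (pg m) p -> size p <= size (enum 'I_m).
  by move=> p gp'; rewrite size_enum_ord -[X in _ <= X](card_ord m); apply: gpath_size gp'.
have iP : (i : nat) < size (enum 'I_m) by rewrite size_enum_ord.
have := tau_nth (@pg_sym m) (@pg_acyc m) gp lp i iP.
by rewrite nth_ord_enum size_enum_ord.
Qed.

Lemma pg_multiset (m : nat) : map (tau (pg m)) (enum 'I_m) = map (fpos m) (iota 0 m).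
Proof. by rewrite -val_enum_ord -map_comp; apply: eq_map => i /=; rewrite pg_tau. Qed.


Definition leafrel (T : finType) (e : rel T) (u : T) : rel (option T) :=
  fun x y => match x, y with
  | Some a, Some b => e a b
  | None, Some b => b == u
  | Some a, None => a == u
  | None, None => false
  end.

Section Leaf.
Variables (T : finType) (e : rel T) (u : T).
Hypothesis esym : symmetric e.
Hypothesis eirr : irreflexive e.
Hypothesis acyc : forall p, ~~ is_gcycle e p.
Hypothesis conn : forall x y, connect e x y.
Variables y1 y2 : T.
Hypothesis y12 : y1 != y2.
Hypothesis ey1 : e u y1.
Hypothesis ey2 : e u y2.

Local Notation e' := (leafrel e u).

Lemma lsym : symmetric e'.
Proof. by case=> [a|] [b|] //=; rewrite esym. Qed.

Lemma lirr : irreflexive e'.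
Proof. by case=> [a|] //=; rewrite eirr. Qed.

Lemma lift_path x q : path e' (Some x) (map Some q) = path e x q.
Proof. by rewrite path_map. Qed.

Lemma lift_gpath p : is_gpath e' (map Some p) = is_gpath e p.
Proof.
case: p => [//|x q]; rewrite map_cons !gpathE lift_path -map_cons.
by rewrite (map_inj_uniq Some_inj).
Qed.

Lemma unlift (p : seq (option T)) : None \notin p -> p = map Some (pmap id p).
Proof.
elim: p => [//|x p IH]; rewrite in_cons negb_or => /andP[xN Np].
by case: x xN => [a|] // _; rewrite /= -IH.
Qed.

Lemma lacyc p : ~~ is_gcycle e' p.
Proof.
apply/negP => cp; case: (boolP (None \in p)) => Np.
  case: (cycle_nbrs lsym cp Np) => y [z [yz _ _]].
  case: y yz => [b|] //; case: z => [c|] //= bc /eqP bE /eqP cE.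
  by rewrite bE cE eqxx in bc.
move: cp; rewrite (unlift Np); case: (pmap id p) => [//|x q].
rewrite map_cons !gcycleE size_map lift_path last_map.
have -> : e' (Some (last x q)) (Some x) = e (last x q) x by [].
have -> : uniq (Some x :: map Some q) = uniq (x :: q).
  by rewrite -map_cons (map_inj_uniq Some_inj).
rewrite -gcycleE.
by apply/negP; exact: acyc.
Qed.

Lemma lift_connect a b : connect e a b -> connect e' (Some a) (Some b).
Proof.
case/connectP => p pth ->; apply/connectP; exists (map Some p).
  by rewrite lift_path.
by rewrite last_map.
Qed.

Lemma lconn x y : connect e' x y.
Proof.
case: x => [a|]; case: y => [b|].
- exact: lift_connect.
- apply: connect_trans (lift_connect (conn a u)) (connect1 _); by rewrite /= eqxx.
- apply: connect_trans (connect1 _) (lift_connect (conn u b)); by rewrite /= eqxx.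
- exact: connect0.
Qed.

Lemma ltree : is_tree e'.
Proof.
split; first by split; [exact: lsym | exact: lirr].
split; first by rewrite card_option.
by split; [exact: lconn | exact: lacyc].
Qed.

Lemma extend A0 : is_gpath e A0 -> last u A0 = u ->
  exists z, e u z && (z \notin A0).
Proof.
move=> gA lA.
case: (boolP (y1 \in A0)) => h1; last by exists y1; rewrite ey1.
case: (boolP (y2 \in A0)) => h2; last by exists y2; rewrite ey2.
exfalso.
have key : forall y, y \in A0 -> e u y -> exists S, A0 = S ++ [:: y; u].
  move=> y yA ey; case: (splitE yA) => S [B AE].
  have lB : last y B = u by rewrite -lA AE last_cat.
  have yu : y != u by apply: contraTneq ey => ->; rewrite eirr.
  have := pen esym acyc (A := S) (y := y) (B := B) (u := u).
  rewrite -AE lB => /(_ gA erefl yu); rewrite esym => /(_ ey) BE.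
  by exists S; rewrite AE BE.
case: (key _ h1 ey1) => S1 E1; case: (key _ h2 ey2) => S2 E2.
have := congr1 rev (etrans (Logic.eq_sym E1) E2).
by rewrite !rev_cat /= => -[E]; move: y12; rewrite E eqxx.
Qed.

Lemma ltau_some v : tau e' (Some v) = tau e v.
Proof.
apply/eqP; rewrite eqn_leq; apply/andP; split; last first.
  apply: (tau_le esym) => p gp hp.
  have := tau_ge (e := e') (v := Some v) (p := map Some p); rewrite size_map lift_gpath.
  by apply => //; case: p gp hp => //= x q _ ->; rewrite eqxx.
apply: (tau_le lsym) => p gp hp.
case: (boolP (None \in p)) => Np; last first.
  move: gp hp; rewrite (unlift Np) size_map lift_gpath => gp hp.
  apply: tau_ge gp _; case: (pmap id p) hp => [|x q] /=; first by rewrite eqxx.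
  by case=> ->; rewrite eqxx.
case: (splitE Np) => A [B pE].
case: A pE => [|a A] pE; first by rewrite pE in hp.
case: B pE => [|b B] pE; last first.
  exfalso; have un := gpath_uniq gp; rewrite pE in un.
  move: gp; rewrite pE gpathE cat_path => /andP[/andP[_ /= /andP[l1 /andP[l2 _]]] _].
  clear pE hp; case: b l2 un => [b|] // /eqP bE un; rewrite bE in un.
  case E: (last a A) l1 => [c|] // /eqP cE; rewrite cE in E.
  move/uniq_mid: (un) => [_ _ _ _ H].
  have : last a A \in a :: A by exact: mem_last.
  by rewrite E => /H; rewrite !inE eqxx orbT.
have NA : None \notin a :: A.
  by move: (gpath_uniq gp); rewrite pE => /uniq_mid[].
have gA : is_gpath e' (a :: A) by move: gp; rewrite pE; apply: gpath_catl.
move: gA hp gp; rewrite pE (unlift NA) lift_gpath.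
case: (pmap id (a :: A)) => [//|x q] gA /= [xv]; subst x => gp.
have lq : last v q = u.
  move: gp; rewrite cat_path => /andP[/andP[_ ]].
  by rewrite last_map /= => /andP[/eqP].
have lq' : last u (v :: q) = u by [].
case: (extend gA lq') => z /andP[ez zn].
have gz : is_gpath e (rcons (v :: q) z).
  move: gA; rewrite rcons_cons !gpathE rcons_path -rcons_cons rcons_uniq zn lq ez andbT.
  by case/andP => -> ->.
have := tau_ge (v := v) gz; rewrite size_rcons size_cat size_map /= addn1.
by apply; rewrite eqxx.
Qed.

Lemma ltau_none : tau e' None = (tau e u).+1.
Proof.
apply/eqP; rewrite eqn_leq; apply/andP; split.
  apply: (tau_le lsym) => p gp hp.
  case: p gp hp => [//|x q] gp /= xE; subst x.
  case: q gp => [|b q] gp; first by rewrite /=.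
  have bE : b = Some u.
    by move: gp; rewrite gpathE => /andP[+ _]; case: b => [c|] //= /andP[/eqP -> _].
  have Nq : None \notin b :: q by move: (gpath_uniq gp); rewrite cons_uniq => /andP[].
  have gq : is_gpath e' (b :: q).
    exact: (gpath_catr lsym (A := [:: None]) (B := b :: q) isT gp).
  move: gq; rewrite (unlift Nq) lift_gpath => gq.
  have := tau_ge (v := u) gq; rewrite ltnS size_map; apply.
  by rewrite bE /= eqxx.
have t0 : 0 < tau e' None by apply: tau_gt0.
rewrite -(prednK t0) ltnS; apply: (tau_le esym) => q gq hq.
rewrite -ltnS (prednK t0).
suff H : is_gpath e' (None :: map Some q).
  by have := tau_ge (e := e') (v := None) H; rewrite /= size_map; apply.
case: q gq hq => [//|x q] gq /= xE; subst x.
move: gq; rewrite gpathE => /andP[pq uq]; rewrite eqxx lift_path pq /=.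
have : uniq (map Some (u :: q)) by rewrite (map_inj_uniq Some_inj).
rewrite map_cons cons_uniq => /andP[-> ->]; rewrite andbT in_cons /=.
by rewrite andbT; apply/negP => /mapP[].
Qed.

Lemma lmultiset : perm_eq (map (tau e') (enum {: option T}))
  ((tau e u).+1 :: map (tau e) (enum T)).
Proof.
have pe : perm_eq (enum {: option T}) (None :: map Some (enum T)).
  apply: uniq_perm; first exact: enum_uniq.
    rewrite cons_uniq (map_inj_uniq Some_inj) enum_uniq andbT.
    by apply/mapP => -[].
  case=> [a|]; rewrite mem_enum ?inE //=.
  by symmetry; apply/mapP; exists a; rewrite ?mem_enum.
have := perm_map (tau e') pe; rewrite /= ltau_none -map_comp.
by rewrite (eq_map (g := tau e)) // => v /=; rewrite ltau_some.
Qed.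

End Leaf.


Lemma construct m O : 0 < m -> all (fun t => ((m.+2)./2 < t) && (t <= m)) O ->
  exists (T : finType) (e : rel T), [/\ is_tree e,
    perm_eq (map (tau e) (enum T)) (map (fpos m) (iota 0 m) ++ O) &
    forall t, (m.+2)./2 <= t < m ->
      exists u y1 y2, [/\ tau e u = t, y1 != y2, e u y1 & e u y2]].
Proof.
move=> m0; elim: O => [_|t O IH] /=.
  exists 'I_m, (pg m); split; first exact: pg_tree.
    by rewrite cats0 pg_multiset.
  move=> t ht.
  have h1 : t.-1 < m by lia.
  have h2 : t.-2 < m by lia.
  have h3 : t < m by lia.
  exists (Ordinal h1), (Ordinal h2), (Ordinal h3); split.
  - by rewrite pg_tau /fpos /=; lia.
  - by apply/negP => /eqP [] E; lia.
  - by rewrite /pg /enat /=; apply/orP; right; apply/eqP; lia.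
  - by rewrite /pg /enat /=; apply/orP; left; apply/eqP; lia.
move=> /andP[/andP[ht1 ht2] aO].
case: (IH aO) => T [e [tr pe inv]].
have [u [y1 [y2 [tu y12 ey1 ey2]]]] := inv t.-1 (ltac:(lia)).
case: (tr) => [[esym eirr] [_ [conn acyc]]].
exists (option T), (leafrel e u); split.
- exact: ltree.
- apply: perm_trans (lmultiset esym eirr acyc y12 ey1 ey2) _.
  rewrite tu (_ : (t.-1).+1 = t); last lia.
  apply: perm_trans (_ : perm_eq _ (t :: (map (fpos m) (iota 0 m) ++ O))) _.
    by rewrite perm_cons.
  by apply: perm_countI => x; rewrite /= !count_cat /=; lia.
- move=> t' ht'; case: (inv t' ht') => u' [z1 [z2 [tu' z12 ez1 ez2]]].
  exists (Some u'), (Some z1), (Some z2); split => //.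
  by rewrite (ltau_some esym eirr acyc y12 ey1 ey2).
Qed.

Lemma sort_perm_sorted (s1 s2 : seq nat) : perm_eq s1 s2 -> sorted leq s2 ->
  sort leq s1 = s2.
Proof.
move=> p s2s; rewrite -(sorted_sort leq_trans s2s).
by apply/perm_sortP => //; [exact: leq_total | exact: leq_trans | exact: anti_leq].
Qed.

Unset Implicit Arguments.

Theorem theorem1p11 (s : seq nat) :
  sorted leq s -> all (fun x => 0 < x) s ->
  ((exists (T : finType) (e : rel T), is_tree e /\ detour_seq e = s) <->
   (s = [:: 1] \/ s = [:: 2; 2] \/
    exists (m : nat) (ks : seq nat),
      let a := (m.+2)./2 in
      [/\ 3 <= m, size ks = m - a, all (fun kj => 2 <= kj) ks &
          s = detour_form a (if odd m then 1 else 2) ks])).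
Proof.
move=> ss _; split.
- case=> T [e [tr dE]].
  case: (tree_multiset tr) => m [O [m0 aO pX]].
  case: (comb_fw m0 aO pX) => ks [sk ak pk].
  have sE : s = detour_form (m.+2)./2 (if odd m then 1 else 2) ks.
    by rewrite -dE /detour_seq; apply: sort_perm_sorted pk (detour_sorted _ _ _).
  have : m = 1 \/ m = 2 \/ 3 <= m by lia.
  case=> [m1|[m2|m3]].
  + left; subst m; move: sk => /= /size0nil E; by rewrite sE E.
  + right; left; subst m; move: sk => /= /size0nil E; by rewrite sE E.
  + by right; right; exists m, ks.
- move=> H.
  have [m [ks [m0 sk ak sE]]] : exists m ks, [/\ 0 < m,
      size ks = m - (m.+2)./2, all (fun kj => 2 <= kj) ks &
      s = detour_form (m.+2)./2 (if odd m then 1 else 2) ks].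
    case: H => [->|[->|[m [ks [m3 sk ak sE]]]]].
    + by exists 1, [::].
    + by exists 2, [::].
    + by exists m, ks; split => //; lia.
  case: (comb_bw m0 sk ak) => O [aO pD].
  case: (construct m0 aO) => T [e [tr pe _]].
  exists T, e; split => //.
  rewrite /detour_seq; apply: sort_perm_sorted => //.
  by rewrite sE; apply: perm_trans pe _; rewrite perm_sym.
Qed.
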